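(* Let $\mathcal{F}$ be a clique tree forest (CTF) in which every clique tree is valid and calibrated. Let $\mathcal{F}'$ be obtained from $\mathcal{F}$ by a finite sequence of the operations (O1)–(O4) described in the context, each applied to the current forest. Then every clique tree of $\mathcal{F}'$ is a valid clique tree.
   Context: All variables are discrete with finite domains; $D_v$ denotes the domain of variable $v$. A clique tree (CT) is a tree whose nodes are cliques (sets of variables) $C_i$, each carrying a nonnegative clique belief $\beta(C_i)$ (a function of the states of the variables in $C_i$). Each edge $(C_i,C_j)$ carries a sepset $S_{i,j}=C_i\cap C_j$ and a nonnegative sepset belief $\mu(S_{i,j})$. A clique tree forest (CTF) is a disjoint collection of clique trees. A CT is valid if every sepset is nonempty and equals the intersection of its two endpoint cliques, and the running intersection property holds: for every variable $v$, the cliques containing $v$ form a connected subtree. A CT is calibrated if for every edge $(C_i,C_j)$ we have $\sum_{C_i\setminus S_{i,j}}\beta(C_i)=\mu(S_{i,j})=\sum_{C_j\setminus S_{i,j}}\beta(C_j)$. The normalization constant of a calibrated CT is $Z=\sum_{C}\beta(C)$, the sum of any one clique belief over all joint states of that clique's variables (for a calibrated tree this does not depend on the clique chosen). A clique $C$ is non-maximal if $C\subseteq C'$ for some neighbouring clique $C'$. The operations are: (O1) Restriction: replace a CT by a connected subtree of it (keeping the beliefs of the retained cliques and sepsets), or delete a CT entirely. (O2) Exact marginalization of a variable $v$: let $ST_v$ be the (connected) subtree of all cliques containing $v$. Replace $ST_v$ by a single clique $C_c=\big(\bigcup_{C\in ST_v}C\big)\setminus\{v\}$ with belief $\beta(C_c)=\sum_{D_v}\frac{\prod_{C\in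 ST_v}\beta(C)}{\prod_{S\in ST_v}\mu(S)}$, where the denominator ranges over the sepsets of edges inside $ST_v$. Every edge joining a clique of $ST_v$ to a clique $N$ outside $ST_v$ is replaced by an edge between $C_c$ and $N$, with the same sepset and sepset belief. (When $ST_v$ is a single clique this is just summing $v$ out of its belief.) (O3) Local marginalization of a variable $v$: choose a nonempty connected subtree $ST_r$ of the cliques containing $v$. Remove $v$ from every clique containing $v$ that is not in $ST_r$, and from every sepset that contains $v$ and is not an edge inside $ST_r$. Each modified clique $C'=C\setminus\{v\}$ gets belief $\beta(C')=\sum_{D_v}\beta(C)$. Each modified sepset $S'=S\setminus\{v\}$ gets belief $\mu(S')=\sum_{D_v}\mu(S)$. The operation is only allowed if no sepset becomes empty, so that the tree stays connected. (O4) Removal of a non-maximal clique: if $C\subseteq C'$ for a neighbour $C'$, delete $C$ and the edge $(C,C')$. Connect each other neighbour $N$ of $C$ to $C'$, with sepset $N\cap C'$ and sepset belief equal to the former belief $\mu(N\cap C)$. *)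

(* Defs.v *)
From HB Require Import structures.
From mathcomp Require Import all_boot all_order all_algebra.
From Stdlib Require List.
Set Implicit Arguments. Unset Strict Implicit. Unset Printing Implicit Defensive.
Import Order.TTheory GRing.Theory Num.Theory.
Local Open Scope ring_scope.

(* A joint state of all variables is an assignment; a belief on a set of    *)
(* variables C is represented as a function on full assignments that only  *)
(* depends on the coordinates in C (see [local]).                           *)

Section CliqueTrees.
Variables (V : finType) (D : V -> finType) (R : realFieldType).

Definition assign := {dffun forall v : V, D v}.
Definition belief := assign -> R.

Definition local (C : {set V}) (phi : belief) : Prop :=
  forall x y : assign, (forall v, v \in C -> x v = y v) -> phi x = phi y.

Definition sumout (A : {set V}) (phi : belief) : belief :=
  fun x => \sum_(y : assign | [forall w, (w \notin A) ==> (y w == x w)]) phi y.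

(* Clique trees.  Nodes are identified by natural numbers; an (undirected)
   edge {i,j} is stored under the key (minn i j, maxn i j). Each edge key
   carries a sepset and a sepset belief. *)
Record CT := mkCT {
  nodes : seq nat;
  clq   : nat -> {set V};
  bel   : nat -> belief;
  edges : seq (nat * nat);
  sep   : nat * nat -> {set V};
  smu   : nat * nat -> belief }.

Definition forest := seq CT.

Definition ekey (i j : nat) : nat * nat := (minn i j, maxn i j).

Definition adj (T : CT) (i j : nat) : bool := ekey i j \in edges T.

Definition connected_in (T : CT) (P : pred nat) : Prop :=
  forall i j, i \in nodes T -> j \in nodes T -> P i -> P j ->
    exists p : seq nat, path (fun a b => adj T a b && P b) i p && (last i p == j).

Definition is_tree (T : CT) : Prop :=
  [/\ uniq (nodes T) /\ nodes T != [::], uniq (edges T),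
      all (fun e => ((e.1 < e.2)%N && (e.1 \in nodes T)) && (e.2 \in nodes T)) (edges T),
      connected_in T predT &
      size (edges T) = (size (nodes T)).-1 ].

Definition is_ct (T : CT) : Prop :=
  [/\ is_tree T,
      forall i, i \in nodes T -> local (clq T i) (bel T i) /\ forall x, 0 <= bel T i x
    & forall e, e \in edges T -> local (sep T e) (smu T e) /\ forall x, 0 <= smu T e x].

Definition valid_ct (T : CT) : Prop :=
  [/\ is_tree T,
      forall e, e \in edges T -> sep T e != set0 /\ sep T e = clq T e.1 :&: clq T e.2
    & forall v : V, connected_in T (fun i => v \in clq T i)].

Definition calibrated (T : CT) : Prop :=
  forall e, e \in edges T -> forall x : assign,
    sumout (clq T e.1 :\: sep T e) (bel T e.1) x = smu T e x /\
    sumout (clq T e.2 :\: sep T e) (bel T e.2) x = smu T e x.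

Definition restrict_to (T : CT) (N : seq nat) : CT :=
  mkCT N (clq T) (bel T)
       (filter (fun e => (e.1 \in N) && (e.2 \in N)) (edges T)) (sep T) (smu T).

Definition op_restrict (T T' : CT) : Prop :=
  exists N : seq nat, [/\ N != [::], uniq N, {subset N <= nodes T},
                          connected_in T (mem N) & T' = restrict_to T N].

Section ExactMarg.
Variables (T : CT) (v : V) (c : nat).
Definition inST (i : nat) : bool := (i \in nodes T) && (v \in clq T i).
Definition ST : seq nat := filter inST (nodes T).
Definition ST_edges := filter (fun e => inST e.1 && inST e.2) (edges T).
Definition bnd_edges := filter (fun e => inST e.1 (+) inST e.2) (edges T).
Definition out_end (e : nat * nat) : nat := if inST e.1 then e.2 else e.1.
Definition new_edges := [seq ekey c (out_end e) | e <- bnd_edges].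
Definition old_edge (k : nat * nat) : nat * nat :=
  nth (0%N, 0%N) bnd_edges (find (fun e => ekey c (out_end e) == k) bnd_edges).
Definition is_new (k : nat * nat) : bool := (k.1 == c) || (k.2 == c).

Definition exact_marg : CT :=
  mkCT (c :: filter (predC inST) (nodes T))
       (fun i => if i == c then (\bigcup_(j <- ST) clq T j) :\ v else clq T i)
       (fun i => if i == c then
                   sumout [set v] (fun y => (\prod_(j <- ST) bel T j y) /
                                            (\prod_(e <- ST_edges) smu T e y))
                 else bel T i)
       (filter (fun e => ~~ inST e.1 && ~~ inST e.2) (edges T) ++ new_edges)
       (fun k => if is_new k then sep T (old_edge k) else sep T k)
       (fun k => if is_new k then smu T (old_edge k) else smu T k).
End ExactMarg.

Definition op_exact (T T' : CT) : Prop :=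
  exists (v : V) (c : nat),
    [/\ ST T v != [::], c \notin nodes T & T' = exact_marg T v c].

Section LocalMarg.
Variables (T : CT) (v : V) (STr : seq nat).
Definition in_STr_edge (e : nat * nat) : bool := (e.1 \in STr) && (e.2 \in STr).
Definition lm_clq (i : nat) : {set V} :=
  if (v \in clq T i) && (i \notin STr) then clq T i :\ v else clq T i.
Definition lm_sep (e : nat * nat) : {set V} :=
  if (v \in sep T e) && ~~ in_STr_edge e then sep T e :\ v else sep T e.
Definition local_marg : CT :=
  mkCT (nodes T) lm_clq
       (fun i => if (v \in clq T i) && (i \notin STr)
                 then sumout [set v] (bel T i) else bel T i)
       (edges T) lm_sep
       (fun e => if (v \in sep T e) && ~~ in_STr_edge e
                 then sumout [set v] (smu T e) else smu T e).
End LocalMarg.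

Definition op_local (T T' : CT) : Prop :=
  exists (v : V) (STr : seq nat),
    [/\ STr != [::] /\ {subset STr <= nodes T},
        (forall i, i \in STr -> v \in clq T i),
        connected_in T (mem STr),
        (forall e, e \in edges T -> lm_sep T v STr e != set0)
      & T' = local_marg T v STr].

Section RemoveNonMax.
Variables (T : CT) (i j : nat).  (* remove clique i, contained in neighbour j *)
Definition touches_i (e : nat * nat) : bool := (e.1 == i) || (e.2 == i).
Definition other_end (e : nat * nat) : nat := if e.1 == i then e.2 else e.1.
Definition other_nbrs : seq nat :=
  filter (fun N => N != j) [seq other_end e | e <- filter touches_i (edges T)].
Definition rm_new_edges := [seq ekey N j | N <- other_nbrs].
Definition not_j (k : nat * nat) : nat := if k.1 == j then k.2 else k.1.
Definition remove_nonmax : CT :=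
  mkCT (filter (fun n => n != i) (nodes T))
       (clq T) (bel T)
       (filter (predC touches_i) (edges T) ++ rm_new_edges)
       (fun k => if k \in rm_new_edges then clq T (not_j k) :&: clq T j else sep T k)
       (fun k => if k \in rm_new_edges then smu T (ekey (not_j k) i) else smu T k).
End RemoveNonMax.

Definition op_remove (T T' : CT) : Prop :=
  exists i j : nat,
    [/\ i \in nodes T, j \in nodes T, adj T i j, clq T i \subset clq T j
      & T' = remove_nonmax T i j].

Definition forest_step (F F' : forest) : Prop :=
  exists (F1 F2 : forest) (T : CT),
    F = F1 ++ T :: F2 /\
    (F' = F1 ++ F2 (* (O1): delete the tree *)
     \/ exists T', F' = F1 ++ T' :: F2 /\
        (op_restrict T T' \/ op_exact T T' \/ op_local T T' \/ op_remove T T')).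

Inductive reachable (F : forest) : forest -> Prop :=
  | reach_refl : reachable F F
  | reach_step : forall F1 F2, reachable F F1 -> forest_step F1 F2 -> reachable F F2.

End CliqueTrees.

(* Main.v *)
Require Import Defs.
From HB Require Import structures.
From mathcomp Require Import all_boot all_order all_algebra.
From mathcomp Require Import zify.
From Stdlib Require List.
From Stdlib Require Import ClassicalEpsilon.
Set Implicit Arguments. Unset Strict Implicit. Unset Printing Implicit Defensive.


Lemma count_le_in (T : eqType) (p q : pred T) (s : seq T) :
  {in s, forall x, p x -> q x} -> count p s <= count q s.
Proof.
elim: s => //= y s IH H.
have H1 : {in s, forall x, p x -> q x} by move=> x xs; apply: H; rewrite inE xs orbT.
have hy : (p y : nat) <= q y.
  by move: (H y (mem_head _ _)); case: (p y); case: (q y) => // /(_ isT).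
have := IH H1; lia.
Qed.

Lemma count_lt_in (T : eqType) (p q : pred T) (s : seq T) x :
  {in s, forall x, p x -> q x} -> x \in s -> q x -> ~~ p x -> count p s < count q s.
Proof.
elim: s => //= y s IH H xs qx px.
have H1 : {in s, forall x, p x -> q x} by move=> z zs; apply: H; rewrite inE zs orbT.
move: xs; rewrite inE => /orP [/eqP Exy|xs].
  subst x; rewrite (negbTE px) qx add0n add1n ltnS; exact: count_le_in.
have hy : (p y : nat) <= q y.
  by move: (H y (mem_head _ _)); case: (p y); case: (q y) => // /(_ isT).
have := IH H1 xs qx px; lia.
Qed.

Lemma count_split (T : eqType) (p q1 q2 : pred T) (s : seq T) :
  {in s, forall x, (p x : nat) = q1 x + q2 x} -> count p s = count q1 s + count q2 s.
Proof.
elim: s => //= y s IH H.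
rewrite (H y (mem_head _ _)) IH; last by move=> z zs; apply: H; rewrite inE zs orbT.
lia.
Qed.

Lemma count_split3 (T : eqType) (p q1 q2 q3 : pred T) (s : seq T) :
  {in s, forall x, (p x : nat) = q1 x + q2 x + q3 x} ->
  count p s = count q1 s + count q2 s + count q3 s.
Proof.
elim: s => //= y s IH H.
rewrite (H y (mem_head _ _)) IH; last by move=> z zs; apply: H; rewrite inE zs orbT.
lia.
Qed.

Lemma count_ge2 (T : eqType) (p : pred T) (s : seq T) x y :
  uniq s -> x \in s -> y \in s -> x != y -> p x -> p y -> 1 < count p s.
Proof.
move=> us xs ys xy px py.
rewrite -size_filter.
have : uniq [:: x; y] by rewrite /= inE xy.
move/uniq_leq_size => /(_ (filter p s)) /=.
apply; move=> z; rewrite !inE mem_filter => /orP [] /eqP ->; apply/andP; split => //.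
Qed.

Lemma crossing (r : rel nat) (X : pred nat) x p :
  path r x p -> X x -> ~~ X (last x p) -> exists a b, [/\ X a, ~~ X b & r a b].
Proof.
elim: p x => [|b p IH] x /=; first by move=> _ ->.
move=> /andP [rxb pp] Xx.
case Xb: (X b); first by apply: IH.
by move=> _; exists x, b; rewrite Xb.
Qed.

Lemma path_map2 (r r' : rel nat) (f : nat -> nat) (Inv : pred nat) x p :
  (forall a b, Inv a -> r a b -> Inv b /\ (f a = f b \/ r' (f a) (f b))) ->
  Inv x -> path r x p -> exists q, path r' (f x) q && (last (f x) q == f (last x p)).
Proof.
move=> H; elim: p x => [|b p IH] x /=; first by move=> _ _; exists [::]; rewrite /=.
move=> Ix /andP [rxb pp].
have [Ib [E|R']] := H x b Ix rxb.
  have [q Hq] := IH b Ib pp; exists q; by rewrite E.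
have [q /andP [Hq Hl]] := IH b Ib pp; exists (f b :: q); by rewrite /= R' Hq.
Qed.

Lemma ekey_sym i j : ekey i j = ekey j i.
Proof. by rewrite /ekey minnC maxnC. Qed.

Lemma ekey_ends i j :
  ((ekey i j).1 = i /\ (ekey i j).2 = j) \/ ((ekey i j).1 = j /\ (ekey i j).2 = i).
Proof.
rewrite /ekey /=; case: (leqP i j) => h; [left|right]; lia.
Qed.

Lemma ekey_pair (e : nat * nat) : e.1 < e.2 -> ekey e.1 e.2 = e.
Proof.
case: e => a b /= h; rewrite /ekey; congr pair; lia.
Qed.

Lemma ekey_inj c x y : ekey c x = ekey c y -> x = y.
Proof.
rewrite /ekey => [[]]; case: (leqP c x) => h1; case: (leqP c y) => h2; lia.
Qed.


Section Graph.
Variables (V : finType) (D : V -> finType) (R : realFieldType).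
Implicit Types (T : CT D R) (P Q X : pred nat).

Definition ecount T P := count (fun e : nat * nat => P e.1 && P e.2) (edges T).
Definition ncount T P := count P (nodes T).
Definition allc T := all (fun e : nat * nat => ((e.1 < e.2) && (e.1 \in nodes T)) && (e.2 \in nodes T)) (edges T).

Lemma allcP T e : allc T -> e \in edges T -> [/\ e.1 < e.2, e.1 \in nodes T & e.2 \in nodes T].
Proof. by move=> /allP H /H /andP [/andP [-> ->] ->]. Qed.

Lemma adj_nodes T a b : allc T -> adj T a b -> [/\ a \in nodes T, b \in nodes T & a != b].
Proof.
move=> H /(allcP H) [lt h1 h2]; case: (ekey_ends a b) => [[E1 E2]|[E1 E2]];
  rewrite E1 E2 in lt h1 h2; split => //; apply/eqP => E; subst; by rewrite ltnn in lt.
Qed.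

Lemma ecount_sub T P Q : (forall k, P k -> Q k) -> ecount T P <= ecount T Q.
Proof.
move=> H; apply: count_le_in => e _ /andP [h1 h2]; by rewrite (H _ h1) (H _ h2).
Qed.

Lemma ncount_sub T P Q : (forall k, P k -> Q k) -> ncount T P <= ncount T Q.
Proof. move=> H; apply: count_le_in => e _; exact: H. Qed.

Lemma greedy T P : uniq (nodes T) -> allc T -> connected_in T P ->
  forall n X, ncount T P - ncount T X <= n -> (forall k, X k -> P k) ->
  (exists r, r \in nodes T /\ X r) ->
  ecount T X + ncount T P <= ecount T P + ncount T X.
Proof.
move=> Hu Ha Hc; elim=> [|n IH] X Hn HXP [r [rin Xr]];
  (have [Hh|Hh] := boolP (has (fun u => P u && ~~ X u) (nodes T));
   [ | move/seq.hasPn: Hh => Hh;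
       have h1 : ncount T P <= ncount T X;
         [ by apply: count_le_in => k kin Pk; move: (Hh k kin); rewrite Pk /= negbK | ];
       have h2 := ecount_sub T HXP;
       by move: h1 h2; clear; move: (ncount T P) (ncount T X) (ecount T X) (ecount T P) => *; lia]);
  have [u uin /andP [Pu nXu]] := seq.hasP Hh.
- have : ncount T X < ncount T P by apply: (count_lt_in (x:=u)) => // k _; exact: HXP.
  by move: Hn; clear; move: (ncount T P) (ncount T X) => *; lia.
- have [p /andP [pp /eqP pl]] := Hc r u rin uin (HXP _ Xr) Pu.
  have nXl : ~~ X (last r p) by rewrite pl.
  have [a [b [Xa nXb /andP [adjab Pb]]]] := crossing pp Xr nXl.
  have [_ bin _] := adj_nodes Ha adjab.
  pose X' := fun k => X k || (k == b).
  have HnX : ncount T X' = ncount T X + 1.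
    rewrite /ncount (@count_split _ X' X (fun k => k == b)); last first.
      move=> k _; rewrite /X'; case: (eqVneq k b) => [->|_]; first by rewrite (negbTE nXb).
      by rewrite orbF addn0.
    congr addn; transitivity (count_mem b (nodes T)); first by apply: eq_count.
    by rewrite count_uniq_mem // bin.
  have HeX : ecount T X < ecount T X'.
    apply: (count_lt_in (x := ekey a b)) => //.
    - by move=> e _ /andP [h1 h2]; rewrite /X' h1 h2.
    - by case: (ekey_ends a b) => [[-> ->]|[-> ->]]; rewrite /X' ?Xa ?eqxx ?orbT.
    - by case: (ekey_ends a b) => [[-> ->]|[-> ->]]; rewrite (negbTE nXb) ?andbF.
  have := IH X'; rewrite HnX.
  have HXP' : forall k, X' k -> P k by move=> k /orP [/HXP|/eqP ->].
  have Xr' : X' r by rewrite /X' Xr.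
  move=> /(_ _ HXP' (ex_intro _ r (conj rin Xr'))).
  have Hn' : ncount T P - (ncount T X + 1) <= n.
    by move: Hn; clear; move: (ncount T P) (ncount T X) => x y; lia.
  move=> /(_ Hn') H.
  by move: H HeX; clear; move: (ncount T P) (ncount T X) (ecount T X) (ecount T X') (ecount T P) => *; lia.
Qed.

Lemma lower_gen T P : uniq (nodes T) -> allc T -> connected_in T P ->
  (exists r, r \in nodes T /\ P r) -> ncount T P <= ecount T P + 1.
Proof.
move=> Hu Ha Hc [r [rin Pr]].
have HXP0 : forall k, k == r -> P k by move=> k /eqP ->.
have := @greedy T P Hu Ha Hc _ (fun k => k == r) (leqnn _) HXP0
  (ex_intro _ r (conj rin (eqxx r))).
have -> : ecount T (fun k => k == r) = 0.
  apply/eqP; rewrite /ecount -leqn0 leqNgt -has_count; apply/hasPn => e ein.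
  have [lt _ _] := allcP Ha ein; apply/negP => /andP [/eqP h1 /eqP h2].
  by rewrite h1 h2 ltnn in lt.
have -> : ncount T (fun k => k == r) = 1.
  rewrite /ncount; transitivity (count_mem r (nodes T)); first by apply: eq_count.
  by rewrite count_uniq_mem // rin.
lia.
Qed.

Lemma tree_lower T P : is_tree T -> connected_in T P ->
  (exists r, r \in nodes T /\ P r) -> ncount T P <= ecount T P + 1.
Proof. move=> [[Hu _] _ Ha _ _]; exact: lower_gen. Qed.

Lemma tree_upper T P : is_tree T ->
  (exists r, r \in nodes T /\ P r) -> ecount T P + 1 <= ncount T P.
Proof.
move=> [[Hu Hne] _ Ha Hc Hs] Hr.
have := @greedy T predT Hu Ha Hc _ P (leqnn _) (fun _ _ => isT) Hr.
have -> : ecount T predT = size (edges T) by rewrite /ecount -(count_predT (edges T)).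
have -> : ncount T predT = size (nodes T) by rewrite /ncount count_predT.
rewrite Hs; case: (nodes T) Hne => // x s _ /=; lia.
Qed.

End Graph.


Section Graph2.
Variables (V : finType) (D : V -> finType) (R : realFieldType).
Implicit Types (T : CT D R) (P Q X A B : pred nat).

Lemma conn_of_count T P : is_tree T -> ncount T P <= ecount T P + 1 -> connected_in T P.
Proof.
move=> Ht Hcnt i j iin jin Pi Pj.
pose r := fun a b => adj T a b && P b.
pose Reach k := exists p, path r i p && (last i p == k).
case: (excluded_middle_informative (Reach j)) => // NR; exfalso.
pose K k : bool := if excluded_middle_informative (Reach k) then true else false.
have KP k : K k = true <-> Reach k.
  by rewrite /K; case: (excluded_middle_informative (Reach k)).
have Hcl a b : Reach a -> adj T a b -> P b -> Reach b.
  move=> [p /andP [pp /eqP pl]] ab Pb; exists (rcons p b).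
  by rewrite rcons_path last_rcons pp pl /r ab Pb eqxx.
have [[Hu _] _ Ha _ _] := Ht.
pose A := fun k => P k && K k.
pose B := fun k => P k && ~~ K k.
have He : ecount T P = ecount T A + ecount T B.
  apply: count_split => e ein.
  have [lt _ _] := allcP Ha ein.
  rewrite /A /B; case P1: (P e.1); case P2: (P e.2); rewrite /= ?andbF //.
  case K1: (K e.1); case K2: (K e.2) => //=.
  - have : K e.2 by apply/KP; apply: (Hcl e.1); [exact/KP| by rewrite /adj ekey_pair | done].
    by rewrite K2.
  - have : K e.1 by apply/KP; apply: (Hcl e.2); [exact/KP| by rewrite /adj ekey_sym ekey_pair | done].
    by rewrite K1.
have Hn : ncount T P = ncount T A + ncount T B.
  by apply: count_split => k _; rewrite /A /B; case: (P k); case: (K k).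
have HA := tree_upper (P := A) Ht.
have HB := tree_upper (P := B) Ht.
have Ki : K i by apply/KP; exists [::]; rewrite /= eqxx.
have Kj : K j = false by apply/negP => /KP.
have := HA (ex_intro _ i (conj iin (introT andP (conj Pi Ki)))).
have := HB (ex_intro _ j (conj jin (introT andP (conj Pj (negbT Kj))))).
move: Hcnt He Hn; clear.
move: (ncount T P) (ecount T P) (ncount T A) (ecount T A) (ncount T B) (ecount T B) => *; lia.
Qed.

Lemma ecount_UI T A B :
  count (fun e : nat * nat => (A e.1 && A e.2) || (B e.1 && B e.2)) (edges T)
   + ecount T (fun k => A k && B k) = ecount T A + ecount T B.
Proof.
rewrite /ecount -(count_predUI (fun e : nat * nat => A e.1 && A e.2)
                              (fun e : nat * nat => B e.1 && B e.2)).
congr addn; apply: eq_count => e /=; lia.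
Qed.

Lemma L_inter T A B : is_tree T -> connected_in T A -> connected_in T B ->
  (exists k, k \in nodes T /\ A k && B k) -> connected_in T (fun k => A k && B k).
Proof.
move=> Ht cA cB [k [kin /andP [Ak Bk]]].
apply: conn_of_count => //.
have H1 := ecount_UI T A B.
have H2 : count (fun e : nat * nat => (A e.1 && A e.2) || (B e.1 && B e.2)) (edges T)
          <= ecount T (fun k => A k || B k).
  apply: count_le_in => e _ /orP [] /andP [h1 h2]; by rewrite /= h1 h2 ?orbT.
have H3 := count_predUI A B (nodes T).
have HU := tree_upper (P := fun k => A k || B k) Ht
   (ex_intro _ k (conj kin (introT orP (or_introl Ak)))).
have LA := tree_lower Ht cA (ex_intro _ k (conj kin Ak)).
have LB := tree_lower Ht cB (ex_intro _ k (conj kin Bk)).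
move: H1 H2 H3 HU LA LB; rewrite /ncount.
have -> : count (predU A B) (nodes T) = count (fun k => A k || B k) (nodes T) by [].
have -> : count (predI A B) (nodes T) = count (fun k => A k && B k) (nodes T) by [].
clear.
move: (count _ (edges T)) (ecount T _) (ecount T A) (ecount T B) (ecount T (fun k => A k || B k))
  (count (fun k => A k || B k) (nodes T)) (count (fun k => A k && B k) (nodes T))
  (count A (nodes T)) (count B (nodes T)) => *. lia.
Qed.

Lemma L_cross T A B e : is_tree T -> connected_in T A -> connected_in T B ->
  (exists k, k \in nodes T /\ A k && B k) -> e \in edges T -> A e.1 -> B e.2 ->
  A e.2 || B e.1.
Proof.
move=> Ht cA cB [k [kin /andP [Ak Bk]]] ein A1 B2.
apply/negPn/negP; rewrite negb_or => /andP [nA2 nB1].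
have H1 := ecount_UI T A B.
have H2 : count (fun e : nat * nat => (A e.1 && A e.2) || (B e.1 && B e.2)) (edges T)
          < ecount T (fun k => A k || B k).
  apply: (count_lt_in (x := e)) => //.
  - move=> x _ /orP [] /andP [h1 h2]; by rewrite /= h1 h2 ?orbT.
  - by rewrite A1 B2 orbT.
  - by rewrite (negbTE nA2) (negbTE nB1) andbF.
have H3 := count_predUI A B (nodes T).
have HU := tree_upper (P := fun k => A k || B k) Ht
   (ex_intro _ k (conj kin (introT orP (or_introl Ak)))).
have HI := tree_upper (P := fun k => A k && B k) Ht
   (ex_intro _ k (conj kin (introT andP (conj Ak Bk)))).
have LA := tree_lower Ht cA (ex_intro _ k (conj kin Ak)).
have LB := tree_lower Ht cB (ex_intro _ k (conj kin Bk)).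
move: H1 H2 H3 HU HI LA LB; rewrite /ncount.
have -> : count (predU A B) (nodes T) = count (fun k => A k || B k) (nodes T) by [].
have -> : count (predI A B) (nodes T) = count (fun k => A k && B k) (nodes T) by [].
clear.
move: (count _ (edges T)) (ecount T (fun k => A k && B k)) (ecount T A) (ecount T B) (ecount T (fun k => A k || B k))
  (count (fun k => A k || B k) (nodes T)) (count (fun k => A k && B k) (nodes T))
  (count A (nodes T)) (count B (nodes T)) => *. lia.
Qed.

End Graph2.


Section Ops1.
Variables (V : finType) (D : V -> finType) (R : realFieldType).
Implicit Types (T : CT D R) (P Q X A B : pred nat).

Lemma connected_in_ext T P Q : (forall k, P k = Q k) -> connected_in T P -> connected_in T Q.
Proof.
move=> E H i j iin jin Qi Qj.
have [p /andP [pp pl]] := H i j iin jin (etrans (E i) Qi) (etrans (E j) Qj).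
exists p; rewrite pl andbT.
by rewrite -(@eq_path _ (fun a b => adj T a b && P b)) // => a b; rewrite E.
Qed.

Lemma count_in_uniq (N s : seq nat) : uniq N -> uniq s -> {subset N <= s} ->
  count (fun k => k \in N) s = size N.
Proof.
move=> uN us sub; rewrite -size_filter; apply: perm_size.
apply: uniq_perm; [exact: filter_uniq | exact: uN |].
move=> x; rewrite mem_filter; case xN: (x \in N) => //=; exact: sub.
Qed.

Lemma restrict_adj T N a b : a \in N -> b \in N -> adj T a b -> adj (restrict_to T N) a b.
Proof.
move=> aN bN; rewrite /adj /= mem_filter => ->; rewrite andbT.
by case: (ekey_ends a b) => [[-> ->]|[-> ->]]; rewrite aN bN.
Qed.

Lemma restrict_conn T N Q : {subset N <= nodes T} ->
  connected_in T (fun k => (k \in N) && Q k) -> connected_in (restrict_to T N) Q.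
Proof.
move=> sub H i j iN jN Qi Qj.
have [p /andP [pp /eqP pl]] := H i j (sub _ iN) (sub _ jN)
   (introT andP (conj iN Qi)) (introT andP (conj jN Qj)).
have step : forall a b, a \in N -> adj T a b && ((b \in N) && Q b) ->
    b \in N /\ ((fun x => x) a = (fun x => x) b \/ adj (restrict_to T N) a b && Q b).
  move=> a b aN /andP [ab /andP [bN Qb]]; split => //; right.
  by rewrite (restrict_adj aN bN ab) Qb.
have [q /andP [pq ql]] := @path_map2 (fun a b => adj T a b && ((b \in N) && Q b))
   (fun a b => adj (restrict_to T N) a b && Q b) (fun x => x) (fun a => a \in N) i p
   step iN pp.
by exists q; rewrite pq -pl.
Qed.

Lemma restrict_valid T T' : valid_ct T -> op_restrict T T' -> valid_ct T'.
Proof.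
move=> [Ht Hsep Hri] [N [Nne uN sub cN ->]].
have [[Hu _] Heu Ha Hc Hs] := Ht.
have Ha' : allc (restrict_to T N).
  apply/allP => e /=; rewrite mem_filter => /andP [/andP [h1 h2] ein].
  by have [lt _ _] := allcP Ha ein; rewrite lt h1 h2.
have Hc' : connected_in (restrict_to T N) predT.
  apply: restrict_conn => //; apply: connected_in_ext cN => k; by rewrite andbT.
have Ht' : is_tree (restrict_to T N).
  split => //=; [exact: filter_uniq | ].
  have r0 : exists r, r \in N by case: (N) Nne => // x s _; exists x; rewrite mem_head.
  have [r rN] := r0.
  have L := @lower_gen _ _ _ (restrict_to T N) predT uN Ha' Hc' (ex_intro _ r (conj rN isT)).
  have U := @tree_upper _ _ _ T (fun k => k \in N) Ht (ex_intro _ r (conj (sub _ rN) rN)).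
  move: L U; rewrite /ecount /ncount /= count_predT count_predT size_filter.
  rewrite (count_in_uniq uN Hu sub).
  move: (count _ _) (size N) => a b; lia.
split => //.
- move=> e /=; rewrite mem_filter => /andP [_ ein]; exact: Hsep.
- move=> v i j iN jN vi vj.
  apply: (restrict_conn sub) => //.
  apply: (@L_inter _ _ _ T (fun k => k \in N) (fun k => v \in clq T k)) => //.
  by exists i; split; [exact: sub | rewrite iN].
Qed.

End Ops1.


Section Ops3.
Variables (V : finType) (D : V -> finType) (R : realFieldType).
Implicit Types (T : CT D R) (P Q X A B : pred nat).

Lemma local_valid T T' : valid_ct T -> op_local T T' -> valid_ct T'.
Proof.
move=> [Ht Hsep Hri] [v [STr [[Sne Ssub] HS cS Hsep' ->]]].
split.
- exact: Ht.
- move=> e ein; split; first exact: Hsep'.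
  have [_ Es] := Hsep e ein.
  rewrite /= /lm_sep /lm_clq /in_STr_edge Es.
  move: (HS e.1) (HS e.2).
  case b1: (e.1 \in STr); case b2: (e.2 \in STr);
  case c1: (v \in clq T e.1); case c2: (v \in clq T e.2) => //= h1 h2;
  rewrite ?inE ?c1 ?c2 /=;
  apply/setP => w; rewrite !inE; case: (eqVneq w v) => [->|_]; rewrite ?c1 ?c2 ?andbT ?andbF //=.
  all: try by (have := h1 isT); rewrite c1.
  all: try by (have := h2 isT); rewrite c2.
- move=> w; case: (eqVneq w v) => [->|ne].
  + apply: (@connected_in_ext _ _ _ (local_marg T v STr) (fun k => k \in STr)); last exact: cS.
    move=> k /=; rewrite /lm_clq; case kS: (k \in STr).
      by rewrite /= andbF (HS k kS).
    by case ck: (v \in clq T k); rewrite /= ?setD11 ?ck.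
  + apply: (@connected_in_ext _ _ _ (local_marg T v STr) (fun k => w \in clq T k)); last exact: Hri.
    move=> k /=; rewrite /lm_clq; case: ifP => // _; by rewrite !inE ne.
Qed.

End Ops3.


Lemma count_ge_list (T : eqType) (p : pred T) (s l : seq T) :
  uniq l -> (forall x, x \in l -> (x \in s) && p x) -> size l <= count p s.
Proof.
move=> ul H; rewrite -size_filter; apply: uniq_leq_size => // x /H.
by rewrite mem_filter andbC.
Qed.

Lemma adj_sym (V : finType) (D : V -> finType) (R : realFieldType) (T : CT D R) a b :
  adj T a b = adj T b a.
Proof. by rewrite /adj ekey_sym. Qed.

Lemma count_one_out (s : seq nat) x : uniq s -> x \in s ->
  size (filter (fun n => n != x) s) = (size s).-1.
Proof.
move=> us xs; rewrite size_filter.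
have := count_uniq_mem x us; rewrite xs => H.
have : size s = count (fun n => n != x) s + count_mem x s.
  rewrite -count_predT; apply: count_split => n _ /=; by case: (eqVneq n x).
rewrite H /=; lia.
Qed.

Section Ops4.
Variables (V : finType) (D : V -> finType) (R : realFieldType).
Implicit Types (T : CT D R) (P Q X A B : pred nat).

Variables (T : CT D R) (i j : nat).
Hypotheses (Ht : is_tree T) (iin : i \in nodes T) (jin : j \in nodes T) (aij : adj T i j).

Let Ha : allc T. Proof. by case: Ht. Qed.
Let Hu : uniq (nodes T). Proof. by case: Ht => [[]]. Qed.
Let Heu : uniq (edges T). Proof. by case: Ht. Qed.

Lemma ij_neq : i != j.
Proof. by have [_ _ ->] := adj_nodes Ha aij. Qed.

Lemma touch_facts e : e \in edges T -> touches_i i e ->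
  [/\ e = ekey i (other_end i e), other_end i e != i, other_end i e \in nodes T
    & adj T i (other_end i e)].
Proof.
move=> ein; have [lt h1 h2] := allcP Ha ein.
rewrite /touches_i /other_end => /orP [/eqP E1|/eqP E2].
- rewrite E1 eqxx; have E : e = ekey i e.2 by rewrite -E1 ekey_pair.
  split => //; [ rewrite -E1; by rewrite neq_ltn lt orbT | by rewrite /adj -E].
- case: eqP => [E1|_].
    by exfalso; move: lt; rewrite E1 E2 ltnn.
  have E : e = ekey i e.1 by rewrite -E2 ekey_sym ekey_pair.
  split => //; [ rewrite -E2; by rewrite neq_ltn lt | by rewrite /adj -E].
Qed.

Lemma other_end_ekey N : N != i -> other_end i (ekey i N) = N.
Proof.
rewrite /other_end => nN; case: (ekey_ends i N) => [[-> ->]|[-> ->]]; first by rewrite eqxx.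
by rewrite (negbTE nN).
Qed.

Lemma touches_ekey N : touches_i i (ekey i N).
Proof. rewrite /touches_i; case: (ekey_ends i N) => [[E _]|[_ E]]; by rewrite E eqxx ?orbT. Qed.

Lemma ON_spec N : N \in other_nbrs T i j -> [/\ N != j, N != i, N \in nodes T & adj T i N].
Proof.
rewrite /other_nbrs mem_filter => /andP [nj /mapP [e]].
rewrite mem_filter => /andP [te ein] E; subst N.
have [_ h1 h2 h3] := touch_facts ein te; split => //.
Qed.

Lemma ON_of N : N != j -> adj T i N -> N \in other_nbrs T i j.
Proof.
move=> nj aN; have [_ _ ni] := adj_nodes Ha aN.
rewrite /other_nbrs mem_filter nj /=; apply/mapP; exists (ekey i N).
  by rewrite mem_filter touches_ekey.
by rewrite other_end_ekey // eq_sym.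
Qed.

Lemma no_triangle N : N \in other_nbrs T i j -> ~~ adj T N j.
Proof.
move=> /ON_spec [nj ni Nin aiN]; apply/negP => aNj.
pose P := fun k => k \in [:: i; j; N].
have U := tree_upper (P := P) Ht (ex_intro _ i (conj iin (mem_head _ _))).
have un : uniq [:: i; j; N] by rewrite /= !inE negb_or ij_neq eq_sym ni eq_sym nj.
have Hn : ncount T P = 3.
  by rewrite /ncount (count_in_uniq un Hu) // => x; rewrite !inE => /or3P [] /eqP ->.
have He : 3 <= ecount T P.
  have ul : uniq [:: ekey i j; ekey i N; ekey N j].
    rewrite /= !inE !negb_or; apply/and3P; split.
    - apply/andP; split; apply/eqP => H.
      + by have E := ekey_inj H; move: nj; rewrite E eqxx.
      + by move: H; rewrite ekey_sym (ekey_sym N j) => H; have E := ekey_inj H; move: ni; rewrite E eqxx.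
    - apply/eqP; rewrite (ekey_sym i N) => H; have E := ekey_inj H; by move: ij_neq; rewrite E eqxx.
    - done.
  have Pe a b : P a -> P b -> P (ekey a b).1 && P (ekey a b).2.
    by move=> pa pb; case: (ekey_ends a b) => [[-> ->]|[-> ->]]; rewrite pa pb.
  have Pi : P i by rewrite /P !inE eqxx.
  have Pj : P j by rewrite /P !inE eqxx orbT.
  have PN : P N by rewrite /P !inE eqxx !orbT.
  apply: (count_ge_list ul) => x; rewrite !inE => /or3P [] /eqP ->; apply/andP; split;
    by [exact: aij | exact: aiN | exact: aNj | exact: Pe].
move: U; rewrite Hn; lia.
Qed.


Let T' := remove_nonmax T i j.

Lemma uniq_oe : uniq [seq other_end i e | e <- filter (touches_i i) (edges T)].
Proof.
rewrite map_inj_in_uniq ?filter_uniq //.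
move=> e e'; rewrite !mem_filter => /andP [te ein] /andP [te' ein'] E.
have [E1 _ _ _] := touch_facts ein te; have [E2 _ _ _] := touch_facts ein' te'.
by rewrite E1 E -E2.
Qed.

Lemma uniq_ON : uniq (other_nbrs T i j).
Proof. exact: filter_uniq uniq_oe. Qed.

Lemma j_in_oe : j \in [seq other_end i e | e <- filter (touches_i i) (edges T)].
Proof.
apply/mapP; exists (ekey i j); first by rewrite mem_filter touches_ekey; exact: aij.
by rewrite other_end_ekey // eq_sym ij_neq.
Qed.

Lemma size_ON : size (other_nbrs T i j) = (count (touches_i i) (edges T)).-1.
Proof. by rewrite /other_nbrs (count_one_out uniq_oe j_in_oe) size_map size_filter. Qed.

Lemma deg_pos : 0 < count (touches_i i) (edges T).
Proof. rewrite -has_count; apply/hasP; exists (ekey i j); [exact: aij | exact: touches_ekey]. Qed.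

Lemma adj'_old a b : a != i -> b != i -> adj T a b -> adj T' a b.
Proof.
move=> ai bi; rewrite /adj => ab; rewrite /= mem_cat mem_filter /= ab andbT /touches_i.
by case: (ekey_ends a b) => [[-> ->]|[-> ->]]; rewrite (negbTE ai) (negbTE bi).
Qed.

Lemma adj'_new N : N \in other_nbrs T i j -> adj T' N j.
Proof. by move=> NO; rewrite /adj /= mem_cat; apply/orP; right; apply: map_f. Qed.

Lemma remove_conn Q : (Q i -> Q j) -> connected_in T Q -> connected_in T' Q.
Proof.
move=> Qij H x y; rewrite /= !mem_filter => /andP [xi xin] /andP [yi yin] Qx Qy.
have [p /andP [pp /eqP pl]] := H x y xin yin Qx Qy.
pose f := fun k => if k == i then j else k.
have step : forall a b, (a \in nodes T) && Q a -> adj T a b && Q b ->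
   (b \in nodes T) && Q b /\ (f a = f b \/ adj T' (f a) (f b) && Q (f b)).
  move=> a b /andP [ain Qa] /andP [ab Qb]; have [_ bin nab] := adj_nodes Ha ab.
  split; first by rewrite bin Qb.
  rewrite /f; case: (eqVneq a i) => [Ea|nai]; case: (eqVneq b i) => [Eb|nbi].
  - by move: nab; rewrite Ea Eb eqxx.
  - case: (eqVneq b j) => [-> |nbj]; first by left.
    right; rewrite Qb andbT adj_sym; apply: adj'_new; apply: ON_of => //; by rewrite -Ea.
  - case: (eqVneq a j) => [-> |naj]; first by left.
    right; rewrite Qij -?Eb // andbT; apply: adj'_new; apply: ON_of => //.
    by rewrite adj_sym -Eb.
  - by right; rewrite Qb andbT; apply: adj'_old.
have [q /andP [pq ql]] := @path_map2 (fun a b => adj T a b && Q b)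
   (fun a b => adj T' a b && Q b) f (fun a => (a \in nodes T) && Q a) x p step
   (introT andP (conj xin Qx)) pp.
exists q; move: pq ql; rewrite pl /f (negbTE xi) (negbTE yi) => -> ->; done.
Qed.

Lemma not_j_ekey N : N != j -> not_j j (ekey N j) = N.
Proof.
move=> nj; rewrite /not_j; case: (ekey_ends N j) => [[-> ->]|[-> ->]].
  by rewrite (negbTE nj). by rewrite eqxx.
Qed.

Lemma remove_tree : is_tree T'.
Proof.
have [[_ _] _ _ Hc Hs] := Ht.
split.
- split; first exact: filter_uniq.
  apply/eqP => E; have : j \in filter (fun n => n != i) (nodes T) by rewrite mem_filter eq_sym ij_neq.
  by rewrite /= in E; rewrite E.
- rewrite /= cat_uniq filter_uniq //=; apply/andP; split.
    apply/hasPn => k /mapP [N NO ->]; rewrite mem_filter negb_and; apply/orP; right.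
    exact: (no_triangle NO).
  rewrite map_inj_in_uniq ?uniq_ON // => N N' _ _.
  rewrite ekey_sym (ekey_sym N' j); exact: ekey_inj.
- apply/allP => e; rewrite /= mem_cat => /orP [].
    rewrite mem_filter /touches_i /= negb_or => /andP [/andP [h1 h2] ein].
    by have [lt e1 e2] := allcP Ha ein; rewrite lt !mem_filter h1 h2 e1 e2.
  move=> /mapP [N NO ->]; have [nj ni Nin _] := ON_spec NO.
  have jni : j != i by rewrite eq_sym ij_neq.
  case: (ekey_ends N j) => [[E1 E2]|[E1 E2]]; rewrite E1 E2 !mem_filter ni jni Nin jin /= ?andbT.
    rewrite /ekey /= in E1 E2; move: nj E1 E2; clear; lia.
  rewrite /ekey /= in E1 E2; move: nj E1 E2; clear; lia.
- apply: remove_conn => //.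
- rewrite /= size_cat size_map size_ON size_filter (count_one_out Hu iin).
  have dp := deg_pos.
  have := count_predC (touches_i i) (edges T).
  rewrite Hs; move: (count _ (edges T)) (count (predC _) (edges T)) (size (nodes T)) dp => *; lia.
Qed.

End Ops4.

Section Ops4b.
Variables (V : finType) (D : V -> finType) (R : realFieldType).

Lemma remove_valid (T T' : CT D R) : valid_ct T -> op_remove T T' -> valid_ct T'.
Proof.
move=> [Ht Hsep Hri] [i [j [iin jin aij sij ->]]].
split.
- exact: remove_tree Ht iin jin aij.
- move=> k kin /=; case: ifP => kn.
    have [N NO Ek] := mapP kn.
    have [nj ni Nin aiN] := ON_spec Ht NO.
    rewrite Ek (not_j_ekey nj); split.
      have [ne Es] := Hsep _ aiN.
      have [w] := set0Pn _ ne; rewrite Es => hw.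
      apply/set0Pn; exists w.
      have : (w \in clq T i) && (w \in clq T N).
        by case: (ekey_ends i N) hw => [[-> ->]|[-> ->]]; rewrite inE // andbC.
      by move=> /andP [wi wN]; rewrite inE wN (subsetP sij).
    by case: (ekey_ends N j) => [[-> ->]|[-> ->]]; rewrite // setIC.
  move: kin; rewrite /= mem_cat kn orbF mem_filter => /andP [_ kin]; exact: Hsep.
- move=> w; apply: (remove_conn Ht); [ by move=> /(subsetP sij) | exact: Hri].
Qed.

End Ops4b.


Lemma mem_bigcup_seq (T : finType) (s : seq nat) (F : nat -> {set T}) w :
  (w \in \bigcup_(j <- s) F j) = has (fun j => w \in F j) s.
Proof. elim: s => [|x s IH]; by rewrite ?big_nil ?big_cons ?inE //= IH. Qed.

Section Ops2.
Variables (V : finType) (D : V -> finType) (R : realFieldType).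
Implicit Types (P Q X A B : pred nat).
Variables (T : CT D R) (v : V) (c : nat).
Hypotheses (Ht : is_tree T)
  (Hsep : forall e, e \in edges T -> sep T e != set0 /\ sep T e = clq T e.1 :&: clq T e.2)
  (Hri : forall w : V, connected_in T (fun i => w \in clq T i))
  (Hne : ST T v != [::]) (cn : c \notin nodes T).

Let Ha : allc T. Proof. by case: Ht. Qed.
Let Hu : uniq (nodes T). Proof. by case: Ht => [[]]. Qed.
Let Heu : uniq (edges T). Proof. by case: Ht. Qed.
Let S := inST T v.

Lemma S_conn : connected_in T S.
Proof.
move=> x y xin yin /andP [_ Sx] /andP [_ Sy].
have [p /andP [pp pl]] := @Hri v x y xin yin Sx Sy.
exists p; rewrite pl andbT; apply: sub_path pp => a b /andP [ab Vb].
by have [_ bin _] := adj_nodes Ha ab; rewrite /S /inST ab bin Vb.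
Qed.

Lemma S_node : exists r, r \in nodes T /\ S r.
Proof.
move: Hne; rewrite /ST; case E: (filter _ _) => [|x s] // _.
have : x \in filter (inST T v) (nodes T) by rewrite E mem_head.
by rewrite mem_filter => /andP [Sx xin]; exists x.
Qed.

Lemma S_count : ncount T S = ecount T S + 1.
Proof.
have L := tree_lower Ht S_conn S_node; have U := tree_upper Ht S_node; lia.
Qed.

Lemma S_nodes k : S k -> k \in nodes T.
Proof. by case/andP. Qed.

Lemma c_notS : ~~ S c.
Proof. by rewrite /S /inST (negbTE cn). Qed.

Lemma bnd_facts e : e \in bnd_edges T v ->
  [/\ e \in edges T, out_end T v e \in nodes T, ~~ S (out_end T v e) &
    exists s, S s /\ ((e.1 = s /\ e.2 = out_end T v e) \/ (e.1 = out_end T v e /\ e.2 = s))].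
Proof.
rewrite mem_filter => /andP [x ein]; have [_ h1 h2] := allcP Ha ein.
rewrite /out_end; move: x; rewrite -/S.
case S1: (S e.1); case S2: (S e.2) => //= _; split; rewrite ?S1 ?S2 //.
- exists e.1; split; [done | by left].
- exists e.2; split; [done | by right].
Qed.

Lemma out_end_ekey a b : S a -> ~~ S b -> out_end T v (ekey a b) = b.
Proof.
move=> Sa Sb; rewrite /out_end -/S.
by case: (ekey_ends a b) => [[-> ->]|[-> ->]]; rewrite ?Sa // (negbTE Sb).
Qed.

Lemma bnd_of a b : S a -> ~~ S b -> adj T a b -> ekey a b \in bnd_edges T v.
Proof.
move=> Sa Sb ab; rewrite mem_filter -/S; apply/andP; split; last exact: ab.
by case: (ekey_ends a b) => [[-> ->]|[-> ->]]; rewrite Sa (negbTE Sb).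
Qed.

Lemma bnd_inj e e' : e \in bnd_edges T v -> e' \in bnd_edges T v ->
  out_end T v e = out_end T v e' -> e = e'.
Proof.
move=> eb e'b Eo; apply/eqP; apply/negPn/negP => ne.
have [ein oin nSo [s [Ss Es]]] := bnd_facts eb.
have [e'in _ _ [s' [Ss' Es']]] := bnd_facts e'b.
set o := out_end T v e in Eo oin nSo Es.
pose P' := fun k => S k || (k == o).
have Hn : ncount T P' = ncount T S + 1.
  rewrite /ncount (@count_split _ P' S (fun k => k == o)); last first.
    move=> k _; rewrite /P'; case: (eqVneq k o) => [->|_]; first by rewrite (negbTE nSo).
    by rewrite orbF addn0.
  congr addn; transitivity (count_mem o (nodes T)); first by apply: eq_count.
  by rewrite count_uniq_mem // oin.
have He : ecount T S + 2 <= ecount T P'.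
  rewrite /ecount (@count_split _ (fun e : nat * nat => P' e.1 && P' e.2)
    (fun e : nat * nat => S e.1 && S e.2)
    (fun e : nat * nat => (P' e.1 && P' e.2) && ~~ (S e.1 && S e.2))); last first.
    move=> x _; rewrite /P'; case: (S x.1); case: (S x.2);
      by case: (x.1 == o); case: (x.2 == o).
  rewrite leq_add2l.
  have pe : forall (x : nat * nat) s0, S s0 -> S x.1 && S x.2 = false ->
     (x.1 = s0 /\ x.2 = o \/ x.1 = o /\ x.2 = s0) ->
     (P' x.1 && P' x.2) && ~~ (S x.1 && S x.2).
    move=> x s0 Ss0 -> [[-> ->]|[-> ->]]; by rewrite /P' Ss0 eqxx ?orbT.
  apply: (count_ge2 Heu ein e'in ne).
  - apply: (pe _ s Ss); last exact: Es.
    by case: Es => [[E1 E2]|[E1 E2]]; rewrite E1 E2 (negbTE nSo) ?andbF.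
  - apply: (pe _ s' Ss'); last by rewrite Eo.
    by case: Es' => [[E1 E2]|[E1 E2]]; rewrite E1 E2 -Eo (negbTE nSo) ?andbF.
have U := tree_upper (P := P') Ht (ex_intro _ o (conj oin (introT orP (or_intror (eqxx o))))).
have := S_count; move: Hn He U; clear; move: (ncount T P') (ncount T S) (ecount T P') (ecount T S) => *; lia.
Qed.

Lemma old_edge_spec e0 : e0 \in bnd_edges T v ->
  let k := ekey c (out_end T v e0) in
  old_edge T v c k \in bnd_edges T v /\ out_end T v (old_edge T v c k) = out_end T v e0.
Proof.
move=> e0b k.
have hs : has (fun e => ekey c (out_end T v e) == k) (bnd_edges T v).
  by apply/hasP; exists e0.
split; first by rewrite /old_edge; apply: mem_nth; rewrite -has_find.
have := nth_find (0%N, 0%N) hs; rewrite -/(old_edge T v c k) => /eqP H.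
exact: (ekey_inj H).
Qed.

Lemma sepU e s : e \in bnd_edges T v -> S s ->
  (e.1 = s /\ e.2 = out_end T v e \/ e.1 = out_end T v e /\ e.2 = s) ->
  clq T s :&: clq T (out_end T v e) = (\bigcup_(j <- ST T v) clq T j :\ v) :&: clq T (out_end T v e).
Proof.
move=> eb Ss Es; have [ein oin nSo _] := bnd_facts eb.
set o := out_end T v e in oin nSo Es *.
have vo : v \notin clq T o by move: nSo; rewrite /S /inST oin.
apply/setP => w; rewrite !inE; case wo: (w \in clq T o); rewrite ?andbF ?andbT //.
case ws: (w \in clq T s).
  have wv : w != v by apply/eqP => E; move: wo vo; rewrite E => ->.
  rewrite wv /= mem_bigcup_seq; apply/esym/hasP; exists s => //.
  by rewrite /ST mem_filter (S_nodes Ss) andbT; exact: Ss.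
apply/esym/negP => /andP [wv]; rewrite mem_bigcup_seq => /hasP [j0].
rewrite /ST mem_filter => /andP [Sj0 j0in] wj0.
have com : exists k, k \in nodes T /\ (v \in clq T k) && (w \in clq T k).
  by exists j0; split => //; case/andP: Sj0 => _ ->; rewrite wj0.
have com' : exists k, k \in nodes T /\ (w \in clq T k) && (v \in clq T k).
  by exists j0; split => //; case/andP: Sj0 => _ ->; rewrite wj0.
have vs : v \in clq T s by case/andP: Ss.
case: Es => [[E1 E2]|[E1 E2]].
- have := L_cross Ht (@Hri v) (@Hri w) com ein; rewrite E1 E2 vs wo (negbTE vo) ws.
  by move=> /(_ isT isT).
- have := L_cross Ht (@Hri w) (@Hri v) com' ein; rewrite E1 E2 vs wo (negbTE vo) ws.
  by move=> /(_ isT isT).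
Qed.


Let T' := exact_marg T v c.
Let f := fun k => if S k then c else k.

Lemma exact_adj_old a b : ~~ S a -> ~~ S b -> adj T a b -> adj T' a b.
Proof.
move=> Sa Sb; rewrite /adj => ab; rewrite /= mem_cat mem_filter ab andbT -/S.
by case: (ekey_ends a b) => [[-> ->]|[-> ->]]; rewrite Sa Sb.
Qed.

Lemma exact_adj_new a b : S a -> ~~ S b -> adj T a b -> adj T' c b.
Proof.
move=> Sa Sb ab; rewrite /adj /= mem_cat; apply/orP; right.
rewrite -(out_end_ekey Sa Sb); apply: map_f; exact: bnd_of.
Qed.

Lemma nodes'P k : k \in nodes T' -> k = c \/ (k \in nodes T /\ ~~ S k).
Proof.
rewrite /= inE mem_filter => /orP [/eqP ->|/andP [nS kin]]; [by left | by right].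
Qed.

Lemma exact_conn Q Q' :
  (forall k, k \in nodes T' -> Q' k -> exists k0, [/\ k0 \in nodes T, Q k0 & f k0 = k]) ->
  (forall k, k \in nodes T -> Q k -> Q' (f k)) ->
  connected_in T Q -> connected_in T' Q'.
Proof.
move=> pre fwd H x y xin yin Qx Qy.
have [x0 [x0in Qx0 fx0]] := pre x xin Qx.
have [y0 [y0in Qy0 fy0]] := pre y yin Qy.
have [p /andP [pp /eqP pl]] := H x0 y0 x0in y0in Qx0 Qy0.
have step : forall a b, (a \in nodes T) && Q a -> adj T a b && Q b ->
   (b \in nodes T) && Q b /\ (f a = f b \/ adj T' (f a) (f b) && Q' (f b)).
  move=> a b /andP [ain Qa] /andP [ab Qb]; have [_ bin _] := adj_nodes Ha ab.
  split; first by rewrite bin Qb.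
  have Qfb := fwd b bin Qb.
  rewrite /f in Qfb *; case Sa: (S a); case Sb: (S b).
  - by left.
  - right; rewrite Sb in Qfb; rewrite Qfb andbT; apply: (exact_adj_new (a := a)) => //.
    by rewrite Sb.
  - right; rewrite Sb in Qfb; rewrite Qfb andbT adj_sym; apply: (exact_adj_new (a := b)) => //.
      by rewrite Sa.
    by rewrite adj_sym.
  - right; rewrite Sb in Qfb; rewrite Qfb andbT; apply: exact_adj_old => //; by rewrite ?Sa ?Sb.
have [q /andP [pq ql]] := @path_map2 (fun a b => adj T a b && Q b)
   (fun a b => adj T' a b && Q' b) f (fun a => (a \in nodes T) && Q a) x0 p step
   (introT andP (conj x0in Qx0)) pp.
by exists q; move: pq ql; rewrite fx0 pl fy0 => -> ->.
Qed.

Lemma pre_c Q : (exists k0, [/\ k0 \in nodes T, Q k0 & S k0]) ->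
  exists k0, [/\ k0 \in nodes T, Q k0 & f k0 = c].
Proof. by move=> [k0 [h1 h2 h3]]; exists k0; rewrite /f h3. Qed.

Lemma exact_tree : is_tree T'.
Proof.
have [[_ _] _ _ Hc Hs] := Ht.
split.
- split => //=; rewrite mem_filter negb_and cn orbT /=; exact: filter_uniq.
- rewrite /= cat_uniq filter_uniq //=; apply/andP; split.
    apply/hasPn => k /mapP [e eb ->]; rewrite mem_filter negb_and; apply/orP; right.
    apply/negP => kin; have [_ e1 e2] := allcP Ha kin.
    by case: (ekey_ends c (out_end T v e)) e1 e2 => [[-> _]|[_ ->]]; rewrite (negbTE cn).
  rewrite map_inj_in_uniq ?filter_uniq // => e e' eb e'b H.
  exact: bnd_inj (ekey_inj H).
- apply/allP => e; rewrite /= mem_cat => /orP [].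
    rewrite mem_filter -/S => /andP [/andP [h1 h2] ein].
    by have [lt e1 e2] := allcP Ha ein; rewrite lt !inE !mem_filter /= h1 h2 e1 e2 !orbT.
  move=> /mapP [e0 eb ->]; have [_ oin nSo _] := bnd_facts eb.
  set o := out_end T v e0 in oin nSo *.
  have co : c != o by apply/eqP => E; move: cn; rewrite E oin.
  have oin' : o \in c :: filter (predC (inST T v)) (nodes T) by rewrite !inE mem_filter oin andbT; apply/orP; right; exact: nSo.
  have cin' : c \in c :: filter (predC (inST T v)) (nodes T) by rewrite mem_head.
  case: (ekey_ends c o) => [[E1 E2]|[E1 E2]]; rewrite E1 E2 oin' cin' !andbT;
    rewrite /ekey /= in E1 E2; move: co E1 E2; clear; lia.
- apply: (exact_conn (Q := predT)) => //.
  move=> k kin _; case: (nodes'P kin) => [->|[kin' nSk]].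
    apply: pre_c; have [r [rin Sr]] := S_node; by exists r.
  by exists k; rewrite /f (negbTE nSk).
- rewrite /= size_cat size_map !size_filter.
  have E1 : size (edges T) = ecount T S
      + count (fun e : nat * nat => ~~ inST T v e.1 && ~~ inST T v e.2) (edges T)
      + count (fun e : nat * nat => inST T v e.1 (+) inST T v e.2) (edges T).
    rewrite -count_predT /ecount; apply: count_split3 => e _ /=.
    rewrite -/S; by case: (S e.1); case: (S e.2).
  have E2 := count_predC (inST T v) (nodes T).
  have E3 := S_count; rewrite /ncount in E3.
  move: E1 E2 E3 Hs; rewrite /S.
  move: (count (fun e : nat * nat => ~~ inST T v e.1 && ~~ inST T v e.2) (edges T))
    (count (fun e : nat * nat => inST T v e.1 (+) inST T v e.2) (edges T))
    (count (predC (inST T v)) (nodes T))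
    (count (inST T v) (nodes T)) (ecount T (inST T v)) (size (edges T)) (size (nodes T)) => *; lia.
Qed.

Lemma exact_valid : valid_ct T'.
Proof.
split; first exact: exact_tree.
- move=> k; rewrite /= mem_cat => /orP [].
    rewrite mem_filter -/S => /andP [/andP [h1 h2] kin].
    have [_ e1 e2] := allcP Ha kin.
    have c1 : k.1 != c by apply/eqP => E; move: cn; rewrite -E e1.
    have c2 : k.2 != c by apply/eqP => E; move: cn; rewrite -E e2.
    by rewrite /is_new (negbTE c1) (negbTE c2) /=; exact: Hsep.
  move=> /mapP [e eb ->].
  have [e'b Eo] := old_edge_spec eb.
  set o := out_end T v e in Eo *.
  set e' := old_edge T v c (ekey c o) in e'b Eo *.
  have [ein oin nSo _] := bnd_facts eb.
  have [e'in _ _ [s [Ss Es]]] := bnd_facts e'b.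
  rewrite Eo in Es.
  have co : o != c by apply/eqP => E; move: cn; rewrite -E oin.
  have isn : is_new c (ekey c o).
    by rewrite /is_new; case: (ekey_ends c o) => [[-> _]|[_ ->]]; rewrite eqxx ?orbT.
  rewrite isn; have [ne Es'] := Hsep e'in; split => //.
  have HU := sepU e'b Ss; rewrite Eo in HU; have {}HU := HU Es.
  rewrite Es'.
  have -> : clq T e'.1 :&: clq T e'.2 = clq T s :&: clq T o.
    by case: Es => [[-> ->]|[-> ->]]; rewrite // setIC.
  rewrite HU; case: (ekey_ends c o) => [[-> ->]|[-> ->]]; rewrite eqxx (negbTE co) //.
  by rewrite setIC.
- move=> w; case: (eqVneq w v) => [->|wv].
    move=> x y xin _ vx; exfalso; move: vx; rewrite /=.
    case: (nodes'P xin) => [->|[xin' nSx]]; first by rewrite eqxx setD11.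
    have xc : x != c by apply/eqP => E; move: cn; rewrite -E xin'.
    rewrite (negbTE xc) => vx; move: nSx; by rewrite /S /inST xin' vx.
  apply: (exact_conn (Q := fun k => w \in clq T k)).
  + move=> k kin; case: (nodes'P kin) => [->|[kin' nSk]].
      rewrite /= eqxx !inE => /andP [_]; rewrite mem_bigcup_seq => /hasP [j0].
      rewrite /ST mem_filter => /andP [Sj0 j0in] wj0.
      by apply: pre_c; exists j0.
    have kc : k != c by apply/eqP => E; move: cn; rewrite -E kin'.
    rewrite /= (negbTE kc) => wk; by exists k; rewrite /f (negbTE nSk).
  + move=> k kin wk; rewrite /f; case Sk: (S k); rewrite /= ?eqxx.
      rewrite !inE wv /= mem_bigcup_seq; apply/hasP; exists k => //.
      by rewrite /ST mem_filter kin andbT.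
    have kc : k != c by apply/eqP => E; move: cn; rewrite -E kin.
    by rewrite (negbTE kc).
  + exact: Hri.
Qed.

End Ops2.


Lemma step_valid (V : finType) (D : V -> finType) (R : realFieldType) (T T' : CT D R) :
  valid_ct T ->
  (op_restrict T T' \/ op_exact T T' \/ op_local T T' \/ op_remove T T') -> valid_ct T'.
Proof.
move=> HT [H|[H|[H|H]]].
- exact: restrict_valid HT H.
- have [Ht Hsep Hri] := HT; have [v [c [Hne cn ->]]] := H.
  exact: exact_valid.
- exact: local_valid HT H.
- exact: remove_valid HT H.
Qed.

Theorem proposition1 (V : finType) (D : V -> finType) (R : realFieldType)
    (F F' : forest D R) :
  List.Forall (fun T => is_ct T /\ valid_ct T /\ calibrated T) F ->
  reachable F F' ->
  List.Forall (fun T => valid_ct T) F'.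
Proof.
move=> H0 Hr.
have H1 : List.Forall (fun T => valid_ct T) F.
  by apply: List.Forall_impl H0 => T [_ [h _]].
elim: Hr => // F1 F2 _ IH [G1 [G2 [T [E Hs]]]].
subst F1; move/List.Forall_app: IH => [HG1 HG2].
inversion HG2 as [|x l HT HG2' Ex]; subst.
case: Hs => [->|[T' [-> Hop]]]; apply/List.Forall_app; split => //.
by constructor => //; exact: step_valid HT Hop.
Qed.
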